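(* Let $\zeta\in(0,1]$, $n'\ge1$, $p_1,\dots,p_{n'}\ge 0$ and $x_1,\dots,x_{n'}\in[0,1]$. Let $\mathcal G$ be a family of pairwise disjoint nonempty subsets (''groups'') of $\{1,\dots,n'\}$ such that for each $G'\in\mathcal G$: $\sum_{j\in G'}x_j\ge 1/10$, and $p_j\ge p_{j'}/10$ for all $j,j'\in G'$. Let $G=\bigcup_{G'\in\mathcal G}G'$ and $\bar G=\{1,\dots,n'\}\setminus G$. Let $X_1,\dots,X_{n'}$ be $\{0,1\}$-valued random variables with $\mathbb E[X_j]=x_j$ for all $j$, $\mathbb E[X_jX_{j'}]\le x_jx_{j'}$ for all $j\ne j'$, and $\mathbb E[X_jX_{j'}]\le(1-\zeta)x_jx_{j'}$ for all $j\ne j'$ lying in a common group $G'\in\mathcal G$. With $L=\sum_{j=1}^{n'}x_jp_j$, $Q=\sum_{j=1}^{n'}x_jp_j^2$, $\bar Q=\sum_{j\in\bar G}x_jp_j^2$, we have $$\mathbb E\Big[\sum_{j=1}^{n'}p_jX_j(p_1X_1+\dots+p_jX_j)\Big]\le\Big(1-\frac{\zeta}{200}\Big)Q+\frac{\zeta}{200}\bar Q+\frac12L^2.$$ *)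

(* Defs.v *)
From HB Require Import structures.
From mathcomp Require Import all_boot all_order all_algebra.
Set Implicit Arguments. Unset Strict Implicit. Unset Printing Implicit Defensive.
Import Order.TTheory GRing.Theory Num.Theory.
Local Open Scope ring_scope.

(* The joint law of a {0,1}-valued random vector (X_1,...,X_n) is a
   probability distribution on outcomes w : {ffun 'I_n -> bool};
   X_j(w) = w j. *)
Definition is_distribution (R : numDomainType) (n : nat)
  (mu : {ffun 'I_n -> bool} -> R) : Prop :=
  (forall w, 0 <= mu w) /\ \sum_(w : {ffun 'I_n -> bool}) mu w = 1.

Definition expect (R : numDomainType) (n : nat)
  (mu : {ffun 'I_n -> bool} -> R) (f : {ffun 'I_n -> bool} -> R) : R :=
  \sum_(w : {ffun 'I_n -> bool}) mu w * f w.

Definition Xv {R : numDomainType} {n : nat} (j : 'I_n)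
  (w : {ffun 'I_n -> bool}) : R := (w j)%:R.

(* Main.v *)
Require Import Defs.
From HB Require Import structures.
From mathcomp Require Import all_boot all_order all_algebra.
From mathcomp Require Import ring lra.
Import Order.TTheory GRing.Theory Num.Theory.
Local Open Scope ring_scope.

Lemma sym_half (R : comRingType) (n : nat) (y : 'I_n -> R) :
  (\sum_(j < n) y j * (\sum_(i < n | (i <= j)%N) y i)) *+ 2 =
  \sum_(i < n) \sum_(j < n) y i * y j + \sum_(j < n) y j ^+ 2.
Proof.
set t := fun i j : 'I_n => y i * y j.
have Hfull : \sum_(i < n) \sum_(j < n) t i j =
   \sum_(i < n) \sum_(j < n) (if (i < j)%N then t i j else 0)
 + \sum_(i < n) \sum_(j < n) (if j == i then t i j else 0)
 + \sum_(i < n) \sum_(j < n) (if (j < i)%N then t i j else 0).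
  rewrite -!big_split /=; apply: eq_bigr => i _.
  rewrite -!big_split /=; apply: eq_bigr => j _.
  case: (ltngtP i j) => h.
  - have : j != i by rewrite neq_ltn h orbT.
    by move/negbTE => ->; rewrite !addr0.
  - have : j != i by rewrite neq_ltn h.
    by move/negbTE => ->; rewrite addr0 add0r.
  - have -> : j == i by apply/eqP/val_inj.
    by rewrite addr0 add0r.
have Hdiag : \sum_(i < n) \sum_(j < n) (if j == i then t i j else 0) =
    \sum_(j < n) y j ^+ 2.
  apply: eq_bigr => i _; rewrite -big_mkcond big_pred1_eq /t expr2 //.
have Hswap : \sum_(i < n) \sum_(j < n) (if (j < i)%N then t i j else 0) =
   \sum_(i < n) \sum_(j < n) (if (i < j)%N then t i j else 0).
  rewrite exchange_big /=; apply: eq_bigr => i _; apply: eq_bigr => j _.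
  by rewrite /t mulrC.
have Hleft : \sum_(j < n) y j * (\sum_(i < n | (i <= j)%N) y i) =
   \sum_(i < n) \sum_(j < n) (if (i < j)%N then t i j else 0)
 + \sum_(j < n) y j ^+ 2.
  rewrite [X in _ = X + _]exchange_big /=.
  rewrite -Hdiag -big_split /=.
  apply: eq_bigr => j _; rewrite mulr_sumr big_mkcond /= -big_split /=.
  apply: eq_bigr => i _.
  case: (ltngtP i j) => h.
  - have : i != j by rewrite neq_ltn h.
    by move/negbTE => ->; rewrite addr0 /t mulrC.
  - have : i != j by rewrite neq_ltn h orbT.
    by move/negbTE => ->; rewrite addr0.
  - have -> : i == j by apply/eqP/val_inj.
    by rewrite add0r /t.
rewrite Hfull Hdiag Hswap Hleft; rewrite mulr2n; ring.
Qed.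

Theorem lemma3 (R : realFieldType) (n : nat) (zeta : R)
  (p x : 'I_n -> R) (Gs : {set {set 'I_n}})
  (mu : {ffun 'I_n -> bool} -> R) :
  0 < zeta -> zeta <= 1 ->
  (1 <= n)%N ->
  (forall j, 0 <= p j) ->
  (forall j, 0 <= x j <= 1) ->
  (forall A B, A \in Gs -> B \in Gs -> A != B -> [disjoint A & B]) ->
  (forall A, A \in Gs -> A != set0) ->
  (forall A, A \in Gs -> 1 / 10 <= \sum_(j in A) x j) ->
  (forall A, A \in Gs -> forall j j', j \in A -> j' \in A -> p j' / 10 <= p j) ->
  is_distribution mu ->
  (forall j, expect mu (Xv j) = x j) ->
  (forall j j', j != j' -> expect mu (fun w => Xv j w * Xv j' w) <= x j * x j') ->
  (forall A, A \in Gs -> forall j j', j \in A -> j' \in A -> j != j' ->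
     expect mu (fun w => Xv j w * Xv j' w) <= (1 - zeta) * (x j * x j')) ->
  let G := cover Gs in
  let Gbar := ~: G in
  let L := \sum_(j < n) x j * p j in
  let Q := \sum_(j < n) x j * p j ^+ 2 in
  let Qbar := \sum_(j in Gbar) x j * p j ^+ 2 in
  expect mu (fun w => \sum_(j < n) p j * Xv j w *
                        (\sum_(i < n | (i <= j)%N) p i * Xv i w))
  <= (1 - zeta / 200) * Q + zeta / 200 * Qbar + L ^+ 2 / 2.

Proof.
move=> zp z1 n1 p0 x01 _ _ Gx Gp mud EX EXX EXXg; cbv zeta.
set G := cover Gs.
set L := \sum_(j < n) x j * p j.
set Q := \sum_(j < n) x j * p j ^+ 2.
set Qbar := \sum_(j in ~: G) x j * p j ^+ 2.
set E := fun i j => expect mu (fun w => Xv i w * Xv j w).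
have expD : forall (f g : {ffun 'I_n -> bool} -> R),
    expect mu (fun w => f w + g w) = expect mu f + expect mu g.
  by move=> f g; rewrite /expect -big_split; apply: eq_bigr => w _; rewrite mulrDr.
have expS : forall (f : 'I_n -> {ffun 'I_n -> bool} -> R),
    expect mu (fun w => \sum_i f i w) = \sum_i expect mu (f i).
  move=> f; rewrite /expect exchange_big /=; apply: eq_bigr => w _; exact: mulr_sumr.
have expZ : forall c (f : {ffun 'I_n -> bool} -> R),
    expect mu (fun w => c * f w) = c * expect mu f.
  by move=> c f; rewrite /expect mulr_sumr; apply: eq_bigr => w _; rewrite mulrCA.
have expE : forall f g : {ffun 'I_n -> bool} -> R, (forall w, f w = g w) ->
    expect mu f = expect mu g.
  by move=> f g h; rewrite /expect; apply: eq_bigr => w _; rewrite h.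
have XX : forall (j : 'I_n) (w : {ffun 'I_n -> bool}), Xv j w * Xv j w = Xv j w :> R.
  by move=> j w; rewrite /Xv; case: (w j); rewrite ?mulr1 ?mulr0.
have Ejj : forall j, E j j = x j.
  by move=> j; rewrite /E -EX; apply: expE => w; rewrite XX.
set F := (X in expect mu X <= _).
have H2 : expect mu F *+ 2 = \sum_i \sum_j p i * p j * E i j + Q.
  rewrite -mulr_natl -expZ.
  rewrite (expE _ (fun w => \sum_i \sum_j (p i * p j) * (Xv i w * Xv j w)
                     + \sum_j p j ^+ 2 * Xv j w)); last first.
    move=> w; rewrite mulr_natl /F sym_half; congr (_ + _).
      apply: eq_bigr => i _; apply: eq_bigr => j _; ring.
    apply: eq_bigr => j _; by rewrite exprMn [Xv j w ^+ 2]expr2 XX.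
  rewrite expD expS; congr (_ + _).
    apply: eq_bigr => i _; rewrite expS; apply: eq_bigr => j _; by rewrite expZ.
  rewrite expS /Q; apply: eq_bigr => j _; by rewrite expZ EX mulrC.
pose same i j := [exists A in Gs, (i \in A) && (j \in A)].
pose W := \sum_i \sum_j (if same i j then p i * p j * (x i * x j) else 0).
have HM : \sum_i \sum_j p i * p j * E i j <= L ^+ 2 + Q - zeta * W.
  have -> : L ^+ 2 + Q - zeta * W = \sum_i \sum_j (p i * p j * (x i * x j)
      + (if j == i then p i ^+ 2 * x i else 0)
      - zeta * (if same i j then p i * p j * (x i * x j) else 0)).
    under eq_bigr => i _ do rewrite sumrB big_split /= -mulr_sumr.
    rewrite sumrB big_split /= -mulr_sumr; congr (_ + _ - _).
      rewrite expr2 /L mulr_suml; apply: eq_bigr => i _.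
      rewrite mulr_sumr; apply: eq_bigr => j _; ring.
    rewrite /Q; apply: eq_bigr => i _; rewrite -big_mkcond big_pred1_eq mulrC //.
  apply: ler_sum => i _; apply: ler_sum => j _.
  have pij : 0 <= p i * p j by rewrite mulr_ge0.
  have xi := x01 i; have xj := x01 j.
  case/andP: xi => xi0 xi1; case/andP: xj => xj0 xj1.
  have a0 : 0 <= p i * p j * (x i * x j) by rewrite !mulr_ge0.
  case: (eqVneq j i) => [->|nji].
    rewrite Ejj.
    have h : zeta * (if same i i then p i * p i * (x i * x i) else 0)
             <= p i * p i * (x i * x i).
      have b0 : 0 <= p i * p i * (x i * x i) by rewrite !mulr_ge0.
      case: ifP => _; last by rewrite mulr0.
      by rewrite -[leRHS]mul1r ler_wpM2r // ltW.
    rewrite expr2; lra.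
  have nij : i != j by rewrite eq_sym.
  case: (boolP (same i j)) => sij.
    case/existsP: (sij) => A /andP [AG /andP [iA jA]].
    have h := EXXg A AG i j iA jA nij.
    have := ler_wpM2l pij h; rewrite /E; lra.
  have h := EXX i j nij.
  have := ler_wpM2l pij h; rewrite /E; lra.
have HQ : Q - Qbar = \sum_i (if i \in G then x i * p i ^+ 2 else 0).
  rewrite /Q (bigID (fun i => i \in G)) /= /Qbar.
  have -> : \sum_(i < n | i \notin G) x i * p i ^+ 2 =
            \sum_(i in ~: G) x i * p i ^+ 2.
    by apply: eq_bigl => i; rewrite in_setC.
  by rewrite addrK big_mkcond.
have HW : (Q - Qbar) / 100 <= W.
  rewrite HQ mulr_suml; apply: ler_sum => i _.
  have xi := x01 i; case/andP: xi => xi0 xi1.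
  have pi0 := p0 i.
  case: (boolP (i \in G)) => iG; last first.
    rewrite mul0r; apply: sumr_ge0 => j _; case: ifP => // _.
    by have := x01 j; case/andP => ? _; rewrite !mulr_ge0.
  case/bigcupP: iG => A AG iA.
  have h1 : \sum_(j in A) p i * p j * (x i * x j) <=
            \sum_j (if same i j then p i * p j * (x i * x j) else 0).
    rewrite big_mkcond; apply: ler_sum => j _.
    have := x01 j; case/andP => xj0 _.
    case: ifP => jA.
      have -> : same i j by apply/existsP; exists A; rewrite AG iA jA.
      by [].
    by case: ifP => _ //; rewrite !mulr_ge0.
  have h2 : \sum_(j in A) p i * (p i / 10) * (x i * x j) <=
            \sum_(j in A) p i * p j * (x i * x j).
    apply: ler_sum => j jA.
    have := x01 j; case/andP => xj0 _.
    apply: ler_wpM2r; first by rewrite mulr_ge0.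
    by apply: (ler_wpM2l (p0 i)); apply: (Gp A AG j i jA iA).
  have h3 : \sum_(j in A) p i * (p i / 10) * (x i * x j) =
            p i * (p i / 10) * x i * \sum_(j in A) x j.
    by rewrite mulr_sumr; apply: eq_bigr => j _; rewrite mulrA.
  have h4 := Gx A AG.
  have c0 : 0 <= p i * (p i / 10) * x i by rewrite !mulr_ge0 // ?invr_ge0 ?ler0n.
  have h5 := ler_wpM2l c0 h4.
  rewrite expr2; nra.
have HZ := ler_wpM2l (ltW zp) HW.
rewrite mulr2n in H2.
nra.
Qed.
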